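(* If $\mathcal G$ is a projective Fraïssé family of connected finite graphs with confluent epimorphisms, then its projective Fraïssé limit is Kelley.
   Context: A graph is a pair $(V,E)$ with $E\subseteq V^2$ reflexive and symmetric; an epimorphism is a vertex map sending edges to edges and surjective on vertices and edges. A topological graph has a compact, zero-dimensional, second-countable (metrizable) vertex set and a closed edge set. A vertex set $S$ is disconnected if $S=P\cup Q$ with $P,Q$ nonempty disjoint closed and no edge between; otherwise connected; components are maximal connected subsets. An epimorphism $f$ is confluent if for each closed connected $Q$ in the target every component $K$ of $f^{-1}(Q)$ satisfies $f(K)=Q$. A topological graph $X$ with a compatible metric is Kelley if $X$ is connected and for every closed connected $K\subseteq X$, every vertex $p\in K$ and every sequence of vertices $p_n\to p$ there are closed connected sets $K_n$ with $p_n\in K_n$ and $K_n\to K$ in the Hausdorff metric. A projective Fraïssé family is a class of finite graphs with a fixed class of epimorphisms, countably many isomorphism types, closed under composition with identities, with the joint projection property and amalgamation property ($f\colon B\to A$, $g\colon C\to A$ fixed give $D$ and fixed $f_0,g_0$ with $f\circ f_0=g\circ g_0$). Its projective Fraïssé limit is the unique topological graph $\mathbb F=\varprojlim\{F_n,\alpha_n\}$ (members of the family, fixed bonding maps, edges coordinatewise) such that every member is an image of $\mathbb F$ under an admissible epimorphism and for admissible $f\colon\mathbb F\to A$ and fixed $g\colon B\to A$ there is admissible $h$ with $f=g\circ h$, admissible meaning $h'\circ\alpha^\infty_m$ with $h'$ fixed. *)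

(* Defs.v *)
From mathcomp Require Import all_boot.
Set Implicit Arguments. Unset Strict Implicit. Unset Printing Implicit Defensive.

Record finite_graph := FGraph {
  fg_carrier :> finType;
  fg_edge : rel fg_carrier;
  fg_refl : reflexive fg_edge;
  fg_sym : symmetric fg_edge }.

Definition epimorphism (A B : finite_graph) (f : A -> B) : Prop :=
  (forall a a', fg_edge a a' -> fg_edge (f a) (f a')) /\
  (forall b : B, exists a : A, f a = b) /\
  (forall b b' : B, fg_edge b b' ->
     exists a a' : A, [/\ fg_edge a a', f a = b & f a' = b']).

(** Connectedness of a vertex subset of a finite (discrete) graph: every
    subset is closed, so S is disconnected iff it splits into two nonempty
    disjoint parts with no edge between them. *)
Definition fdisconnected (A : finite_graph) (S : {set A}) : Prop :=
  exists P Q : {set A}, [/\ P :|: Q = S, P != set0, Q != set0,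
    [disjoint P & Q] &
    forall x y, x \in P -> y \in Q -> ~~ fg_edge x y].

Definition fconnected (A : finite_graph) (S : {set A}) : Prop := ~ fdisconnected S.

Definition fcomponent (A : finite_graph) (S K : {set A}) : Prop :=
  [/\ K \subset S, fconnected K &
      forall K' : {set A}, K \subset K' -> K' \subset S -> fconnected K' -> K' = K].

Definition confluent (A B : finite_graph) (f : A -> B) : Prop :=
  epimorphism f /\
  forall Q : {set B}, fconnected Q ->
    forall K : {set A}, fcomponent (f @^-1: Q) K -> f @: K = Q.

Definition fgraph_iso (A B : finite_graph) : Prop :=
  exists f : A -> B, bijective f /\ forall a a', fg_edge (f a) (f a') = fg_edge a a'.

(** * Projective Fraïssé families.
    [G] is the class of graphs, [Fix A B f] says that [f : A -> B] is one of
    the fixed epimorphisms (only meaningful for members of [G]). *)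
Definition proj_fraisse_family (G : finite_graph -> Prop)
    (Fix : forall A B : finite_graph, (A -> B) -> Prop) : Prop :=
  (forall (A B : finite_graph) (f : A -> B), G A -> G B -> Fix A B f -> epimorphism f) /\
  (exists H : nat -> finite_graph, forall A : finite_graph, G A -> exists k, fgraph_iso A (H k)) /\
  (forall A : finite_graph, G A -> Fix A A id) /\
  (forall (A B C : finite_graph) (f : A -> B) (g : B -> C), G A -> G B -> G C ->
     Fix A B f -> Fix B C g -> Fix A C (g \o f)) /\
  (forall A B : finite_graph, G A -> G B ->
     exists (C : finite_graph) (f : C -> A) (g : C -> B), [/\ G C, Fix C A f & Fix C B g]) /\
  (forall (A B C : finite_graph) (f : B -> A) (g : C -> A), G A -> G B -> G C ->
     Fix B A f -> Fix C A g ->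
     exists (D : finite_graph) (f0 : D -> B) (g0 : D -> C),
       [/\ G D, Fix D B f0, Fix D C g0 & forall d, f (f0 d) = g (g0 d)]).

Section InvLim.
Variables (F : nat -> finite_graph) (alpha : forall n, F n.+1 -> F n).

Definition invlim : Type :=
  {x : forall n, F n | forall n, alpha (x n.+1) = x n}.

Definition il_edge (x y : invlim) : Prop :=
  forall n, fg_edge (proj1_sig x n) (proj1_sig y n).

(** [near m x y] iff d(x,y) < 2^-m for the compatible ultrametric
    d(x,y) = 2^-(least k with x_k <> y_k). *)
Definition near (m : nat) (x y : invlim) : Prop :=
  forall k, k <= m -> proj1_sig x k = proj1_sig y k.

Definition closure (P : invlim -> Prop) (x : invlim) : Prop :=
  forall m, exists y, P y /\ near m x y.

Definition closed (P : invlim -> Prop) : Prop :=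
  forall x, closure P x -> P x.

Definition rel_closed (S P : invlim -> Prop) : Prop :=
  forall x, S x -> closure P x -> P x.

Definition disconnected (S : invlim -> Prop) : Prop :=
  exists P Q : invlim -> Prop,
    (forall x, S x <-> P x \/ Q x) /\
    (exists x, P x) /\ (exists x, Q x) /\
    (forall x, ~ (P x /\ Q x)) /\
    rel_closed S P /\ rel_closed S Q /\
    (forall x y, P x -> Q y -> ~ il_edge x y).

Definition connected (S : invlim -> Prop) : Prop := ~ disconnected S.

Definition seq_converges (ps : nat -> invlim) (p : invlim) : Prop :=
  forall m, exists N, forall n, N <= n -> near m (ps n) p.

Definition hausdorff_converges (Ks : nat -> invlim -> Prop) (K : invlim -> Prop)
  : Prop :=
  forall m, exists N, forall n, N <= n ->
    (forall x, Ks n x -> exists y, K y /\ near m x y) /\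
    (forall y, K y -> exists x, Ks n x /\ near m x y).

Definition kelley : Prop :=
  connected (fun _ => True) /\
  forall (K : invlim -> Prop) (p : invlim) (ps : nat -> invlim),
    closed K -> connected K -> K p -> seq_converges ps p ->
    exists Ks : nat -> invlim -> Prop,
      (forall n, closed (Ks n)) /\ (forall n, connected (Ks n)) /\
      (forall n, Ks n (ps n)) /\ hausdorff_converges Ks K.

Definition admissible (Fix : forall A B : finite_graph, (A -> B) -> Prop)
    (A : finite_graph) (h : invlim -> A) : Prop :=
  exists m (h' : F m -> A), Fix (F m) A h' /\
    forall x, h x = h' (proj1_sig x m).

Definition is_proj_fraisse_limit (G : finite_graph -> Prop)
    (Fix : forall A B : finite_graph, (A -> B) -> Prop) : Prop :=
  (forall n, G (F n)) /\
  (forall n, Fix (F n.+1) (F n) (@alpha n)) /\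
  (forall A : finite_graph, G A -> exists h : invlim -> A, admissible Fix h /\
       (forall a : A, exists x, h x = a) /\
       (forall a a' : A, fg_edge a a' ->
          exists x y, il_edge x y /\ h x = a /\ h y = a')) /\
  (forall (A B : finite_graph) (f : invlim -> A) (g : B -> A), G A -> G B ->
     admissible Fix f -> Fix B A g ->
     exists h : invlim -> B, admissible Fix h /\ forall x, f x = g (h x)).

End InvLim.

(* Main.v *)
From Stdlib Require Import ClassicalEpsilon Classical.
From Stdlib Require Eqdep_dec PeanoNat.
Require Import Defs.
From mathcomp Require Import all_boot.
Set Implicit Arguments. Unset Strict Implicit. Unset Printing Implicit Defensive.

Definition asb (P : Prop) : bool :=
  if excluded_middle_informative P then true else false.
Lemma asbP (P : Prop) : reflect P (asb P).
Proof. rewrite /asb; case: excluded_middle_informative => h; by constructor. Qed.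

Section Koenig.
Variables (X : nat -> finType) (beta : forall k, X k.+1 -> X k) (S : forall k, {set X k}).
Hypothesis S0 : forall k, S k != set0.
Hypothesis Sb : forall k b, b \in S k.+1 -> beta b \in S k.

Fixpoint Desc (j : nat) : forall k, {set X k} :=
  match j with 0 => S | j'.+1 => fun k => S k :&: (@beta k) @: Desc j' k.+1 end.

Lemma DescS j k : Desc j k \subset S k.
Proof. case: j => [|j] /=; first exact: subxx. exact: subsetIl. Qed.

Lemma Desc_dec j k : Desc j.+1 k \subset Desc j k.
Proof.
elim: j k => [|j IH] k /=; first exact: subsetIl.
apply: setIS; apply: imsetS; exact: IH.
Qed.

Lemma Desc_mono j j' k : j <= j' -> Desc j' k \subset Desc j k.
Proof.
move=> /subnK <-; elim: (j' - j) => [|d IH]; first by rewrite add0n.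
rewrite addSn; exact: subset_trans (Desc_dec _ _) IH.
Qed.

Lemma Desc_n0 j k : Desc j k != set0.
Proof.
elim: j k => [|j IH] k /=; first exact: S0.
have /set0Pn [b hb] := IH k.+1.
apply/set0Pn; exists (beta b); rewrite inE; apply/andP; split.
  apply: Sb; exact: (subsetP (DescS j k.+1)) _ hb.
by apply/imsetP; exists b.
Qed.

Lemma Desc_stab k : exists j0, forall j, Desc j0 k \subset Desc j k.
Proof.
suff H : forall c j, #|Desc j k| <= c ->
    exists j0, forall j', j0 <= j' -> Desc j' k = Desc j0 k.
  have [j0 Hj0] := H _ 0 (leqnn _).
  exists j0 => j; case: (leqP j0 j) => h; first by rewrite (Hj0 _ h).
  exact: Desc_mono (ltnW h).
elim=> [|c IH] j hc.
  exists j => j' hj'; move: hc; rewrite leqn0 cards_eq0 => /eqP E.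
  apply/eqP; rewrite eqEsubset Desc_mono // E sub0set //.
case: (classic (exists j', j <= j' /\ Desc j' k <> Desc j k)) => [[j' [hj' hne]]|hno].
  apply: (IH j').
  have hp : Desc j' k \proper Desc j k.
    by rewrite properEneq Desc_mono // andbT; apply/eqP.
  have := proper_card hp => h; rewrite -ltnS; exact: leq_trans h hc.
exists j => j' hj'; apply: NNPP => hne; apply: hno; exists j'; split => //.
Qed.

Definition E k := [set b | asb (forall j, b \in Desc j k)].

Lemma E_n0 k : exists b, b \in E k.
Proof.
have [j0 Hj0] := Desc_stab k.
have /set0Pn [b hb] := Desc_n0 j0 k.
exists b; rewrite inE; apply/asbP => j; exact: (subsetP (Hj0 j)).
Qed.

Lemma E_lift k b : b \in E k -> exists c, (c \in E k.+1) && (beta c == b).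
Proof.
rewrite inE => /asbP hb; have [j0 Hj0] := Desc_stab k.+1.
have := hb j0.+1; rewrite /= inE => /andP [_ /imsetP [c hc ->]].
exists c; rewrite eqxx andbT inE; apply/asbP => j; exact: (subsetP (Hj0 j)).
Qed.

Definition step k (u : {b : X k | b \in E k}) : {c : X k.+1 | c \in E k.+1} :=
  let ex := E_lift (proj2_sig u) in
  exist _ (@xchoose _ (fun c => (c \in E k.+1) && (beta c == proj1_sig u)) ex)
    (proj1 (elimT andP (xchooseP ex))).

Definition b0 : {b : X 0 | b \in E 0} :=
  let ex := E_n0 0 in exist _ (@xchoose _ (fun b => b \in E 0) ex) (xchooseP ex).

Fixpoint build k : {b : X k | b \in E k} :=
  match k with 0 => b0 | k'.+1 => step (build k') end.

Lemma koenig : exists x : forall k, X k,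
  (forall k, beta (x k.+1) = x k) /\ (forall k, x k \in S k).
Proof.
exists (fun k => proj1_sig (build k)); split => k.
  rewrite /=; case/andP: (xchooseP (E_lift (proj2_sig (build k)))) => _ /eqP //.
have := proj2_sig (build k); rewrite inE => /asbP h; exact: h 0.
Qed.
End Koenig.

Section Inv.
Variables (F : nat -> finite_graph) (alpha : forall n, F n.+1 -> F n).
Notation IL := (invlim alpha).
Notation pr x k := (proj1_sig x k).

Lemma thread_eq_near M (x y : IL) : pr x M = pr y M -> near M x y.
Proof.
elim: M => [|M IH] h k hk.
  by move: hk; rewrite leqn0 => /eqP ->.
move: hk; rewrite leq_eqVlt => /orP [/eqP -> //| hk].
apply: (IH _ k hk).
by rewrite -(proj2_sig x M) -(proj2_sig y M) h.
Qed.

Definition tg k (b : F k) : {i : nat & F i} := existT (fun i => fg_carrier (F i)) k b.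

Section Lift.
Variables (D : forall k, {set F k}) (hD : forall k, (@alpha k) @: D k.+1 = D k).
Variables (k : nat) (a : F k) (ha : a \in D k).

Fixpoint Sp j : {set F j} :=
  match j with
  | 0 => [set b in D 0 | (0 < k) || asb (tg b = tg a)]
  | j'.+1 => [set b in D j'.+1 | (j'.+1 < k) || asb (tg b = tg a)
                 || ((k < j'.+1) && (alpha b \in Sp j'))]
  end.

Lemma Sp_D j : Sp j \subset D j.
Proof. apply/subsetP; case: j => [|j] b; rewrite inE => /andP [] //. Qed.

Lemma Sp_lt j b : j < k -> b \in D j -> b \in Sp j.
Proof. case: j b => [|j] b hj hb; by rewrite inE hb hj. Qed.

Lemma Sp_eq j (b : F j) : b \in D j -> tg b = tg a -> b \in Sp j.
Proof.
move=> hb e; have e' : asb (tg b = tg a) by apply/asbP.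
case: j b hb e e' => [|j] b hb e e'; by rewrite inE hb e' ?orbT.
Qed.

Lemma Sp_a : a \in Sp k.
Proof. exact: Sp_eq. Qed.

Lemma Sp_k j (b : F j) : b \in Sp j -> j = k -> tg b = tg a.
Proof.
case: j b => [|j] b; rewrite inE => /andP [_ h] e.
  case/orP: h => [h|/asbP //]; by rewrite -e in h.
case/orP: h => [/orP [h|/asbP //]|/andP [h _]]; by rewrite e ltnn in h.
Qed.

Lemma Dne j : j <= k -> D j != set0.
Proof.
suff H : forall d j, j + d = k -> D j != set0.
  move=> hj; apply: (H (k - j)); exact: subnKC.
elim=> [|d IH] j' e.
  rewrite addn0 in e; subst; apply/set0Pn; by exists a.
have /set0Pn [b hb] : D j'.+1 != set0 by apply: IH; rewrite addSnnS.
apply/set0Pn; exists (alpha b); rewrite -hD; by apply/imsetP; exists b.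
Qed.

Lemma Sp_b j b : b \in Sp j.+1 -> alpha b \in Sp j.
Proof.
rewrite inE => /andP [hb h].
have hab : alpha b \in D j by rewrite -hD; apply/imsetP; exists b.
case/orP: h => [/orP [h|h]|/andP [_ h] //].
  by apply: Sp_lt => //; exact: ltnW.
move/asbP: h => h; apply: Sp_lt => //.
by have := f_equal (@projT1 _ _) h => /= ->.
Qed.

Lemma Sp_n0 j : Sp j != set0.
Proof.
have low : forall j, j <= k -> Sp j != set0.
  move=> j'; rewrite leq_eqVlt => /orP [/eqP ->|hj].
    apply/set0Pn; exists a; exact: Sp_a.
  have /set0Pn [b hb] := Dne (ltnW hj).
  apply/set0Pn; exists b; exact: Sp_lt.
elim: j => [|j IH]; first exact: low.
case: (leqP j.+1 k) => hjk; first exact: low.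
have /set0Pn [b hb] := IH.
have : b \in D j by exact: (subsetP (Sp_D j)).
rewrite -hD => /imsetP [c hc ec].
apply/set0Pn; exists c; rewrite inE hc /= hjk /= -ec hb.
by rewrite !orbT.
Qed.

Lemma chain_lift : exists x : IL, (forall j, pr x j \in D j) /\ pr x k = a.
Proof.
have [x [hx1 hx2]] := @koenig (fun j => fg_carrier (F j)) alpha Sp Sp_n0 Sp_b.
exists (exist _ x hx1); split => [j|] /=.
  exact: (subsetP (Sp_D j)).
apply: (Eqdep_dec.inj_pair2_eq_dec _ PeanoNat.Nat.eq_dec (fun i => fg_carrier (F i))).
exact: (Sp_k (hx2 k)).
Qed.
End Lift.
End Inv.

Section Inv2.
Variables (F : nat -> finite_graph) (alpha : forall n, F n.+1 -> F n).
Notation IL := (invlim alpha).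
Notation pr x k := (proj1_sig x k).
Hypothesis edge_alpha : forall k (a b : F k.+1), fg_edge a b -> fg_edge (alpha a) (alpha b).

Fact img_key : unit. Proof. exact: tt. Qed.
Definition img (P : IL -> Prop) k : {set F k} :=
  locked_with img_key [set a | asb (exists x, P x /\ pr x k = a)].

Lemma imgP (P : IL -> Prop) k a : reflect (exists x, P x /\ pr x k = a) (a \in img P k).
Proof. rewrite /img locked_withE inE; exact: asbP. Qed.

Lemma img_in (P : IL -> Prop) k x : P x -> pr x k \in img P k.
Proof. by move=> h; apply/imgP; exists x. Qed.

Lemma chain_connected (D : forall k, {set F k})
  (hD : forall k, (@alpha k) @: D k.+1 = D k) (hc : forall k, fconnected (D k))
  (S : IL -> Prop) (hS : forall x, S x <-> forall k, pr x k \in D k) :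
  connected S.
Proof.
move=> [P [Q [hPQ [[p0 hp0] [[q0 hq0] [hdis [hPc [hQc hedge]]]]]]]].
have key : exists k, forall a b, a \in img P k -> b \in img Q k -> ~~ fg_edge a b.
  apply: NNPP => hno.
  have hall : forall k, exists2 ab : (F k * F k)%type, true &
      ab \in [set ab | [&& ab.1 \in img P k, ab.2 \in img Q k & fg_edge ab.1 ab.2]].
    move=> k; apply: NNPP => h; apply: hno; exists k => a b ha hb.
    apply/negP => e; apply: h; exists (a, b) => //; by rewrite inE /= ha hb e.
  have S0 : forall k, [set ab : (F k * F k)%type | [&& ab.1 \in img P k, ab.2 \in img Q k
                 & fg_edge ab.1 ab.2]] != set0.
    move=> k; have [ab _ h] := hall k; apply/set0Pn; by exists ab.
  have Sb : forall k (ab : (F k.+1 * F k.+1)%type),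
     ab \in [set ab : (F k.+1 * F k.+1)%type | [&& ab.1 \in img P k.+1, ab.2 \in img Q k.+1
                 & fg_edge ab.1 ab.2]] ->
     (alpha ab.1, alpha ab.2) \in [set ab : (F k * F k)%type | [&& ab.1 \in img P k, ab.2 \in img Q k
                 & fg_edge ab.1 ab.2]].
    move=> k [a b]; rewrite !inE /= => /and3P [/imgP [x [hx <-]] /imgP [y [hy <-]] e].
    rewrite (proj2_sig x k) (proj2_sig y k) !img_in //=.
    by have := edge_alpha e; rewrite (proj2_sig x k) (proj2_sig y k).
  have KK := @koenig (fun k => ((F k * F k)%type : finType))
     (fun k (ab : (F k.+1 * F k.+1)%type) => (alpha ab.1, alpha ab.2)) _ S0 Sb.
  case: KK => z [hz1 hz2].
  have c1 : forall k, alpha (z k.+1).1 = (z k).1 by move=> k; rewrite -(hz1 k).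
  have c2 : forall k, alpha (z k.+1).2 = (z k).2 by move=> k; rewrite -(hz1 k).
  pose x : IL := exist _ (fun k => (z k).1) c1.
  pose y : IL := exist _ (fun k => (z k).2) c2.
  have hzk : forall k, [&& (z k).1 \in img P k, (z k).2 \in img Q k & fg_edge (z k).1 (z k).2].
    move=> k; have := hz2 k; by rewrite inE.
  have Px : P x.
    have Sx : S x.
      apply/hS => k; case/and3P: (hzk k) => /imgP [w [hw ew]] _ _.
      have := (proj1 (hS w)) (proj2 (hPQ w) (or_introl hw)) k; by rewrite ew.
    apply: hPc => // m; case/and3P: (hzk m) => /imgP [w [hw ew]] _ _.
    exists w; split => //; apply: thread_eq_near; by rewrite ew.
  have Qy : Q y.
    have Sy : S y.
      apply/hS => k; case/and3P: (hzk k) => _ /imgP [w [hw ew]] _.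
      have := (proj1 (hS w)) (proj2 (hPQ w) (or_intror hw)) k; by rewrite ew.
    apply: hQc => // m; case/and3P: (hzk m) => _ /imgP [w [hw ew]] _.
    exists w; split => //; apply: thread_eq_near; by rewrite ew.
  apply: (hedge x y Px Qy) => k; by case/and3P: (hzk k).
case: key => k hk; apply: (hc k).
exists (img P k), (img Q k); split.
- apply/setP => a; rewrite inE; apply/orP/idP.
    case=> /imgP [w [hw <-]].
      exact: (proj1 (hS w)) (proj2 (hPQ w) (or_introl hw)) k.
    exact: (proj1 (hS w)) (proj2 (hPQ w) (or_intror hw)) k.
  move=> ha; have [x [hx ex]] := chain_lift hD ha.
  case: (proj1 (hPQ x) (proj2 (hS x) hx)) => h; [left|right]; apply/imgP; by exists x.
- apply/set0Pn; exists (pr p0 k); exact: img_in.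
- apply/set0Pn; exists (pr q0 k); exact: img_in.
- rewrite disjoint_subset; apply/subsetP => a ha; rewrite inE; apply/negP => hb.
  by have := hk _ _ ha hb; rewrite fg_refl.
- exact: hk.
Qed.

Lemma img_conn (K : IL -> Prop) k : connected K -> fconnected (img K k).
Proof.
move=> hK [P' [Q' [hU hP hQ hd he]]]; apply: hK.
exists (fun x => K x /\ pr x k \in P'), (fun x => K x /\ pr x k \in Q').
split; [|split; [|split; [|split; [|split; [|split]]]]].
- move=> x; split; last by case=> [][].
  move=> Kx; have : pr x k \in P' :|: Q' by rewrite hU; exact: img_in.
  rewrite inE => /orP [h|h]; [left|right]; by split.
- case/set0Pn: hP => a ha; have : a \in img K k by rewrite -hU inE ha.
  case/imgP => x [Kx ex]; exists x; by rewrite ex.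
- case/set0Pn: hQ => a ha; have : a \in img K k by rewrite -hU inE ha orbT.
  case/imgP => x [Kx ex]; exists x; by rewrite ex.
- move=> x [[_ h1] [_ h2]]; by rewrite (disjointFr hd h1) in h2.
- move=> x Kx hcl; split => //; case: (hcl k) => y [[Ky hy] hn].
  by rewrite (hn k (leqnn k)).
- move=> x Kx hcl; split => //; case: (hcl k) => y [[Ky hy] hn].
  by rewrite (hn k (leqnn k)).
- move=> x y [_ hx] [_ hy] hxy; by move: (he _ _ hx hy); rewrite (hxy k).
Qed.

Lemma img_alpha (K : IL -> Prop) k : (@alpha k) @: img K k.+1 = img K k.
Proof.
apply/eqP; rewrite eqEsubset; apply/andP; split; apply/subsetP => a.
  case/imsetP => b /imgP [x [Kx <-]] ->.
  apply/imgP; exists x; split => //; exact: (esym (proj2_sig x k)).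
case/imgP => x [Kx <-]; rewrite -(proj2_sig x k).
by apply/imsetP; exists (pr x k.+1) => //; exact: img_in.
Qed.
End Inv2.

Lemma singleton_conn (A : finite_graph) (b : A) : fconnected [set b].
Proof.
move=> [P [Q [hU /set0Pn [x hx] /set0Pn [y hy] hd _]]].
have : x \in [set b] by rewrite -hU inE hx.
have : y \in [set b] by rewrite -hU inE hy orbT.
rewrite !inE => /eqP ey /eqP ex; subst.
by rewrite (disjointFr hd hx) in hy.
Qed.

Lemma comp_exists (A : finite_graph) (S : {set A}) b :
  b \in S -> exists C, fcomponent S C /\ b \in C.
Proof.
move=> hb.
pose Pc := fun C : {set A} => [&& b \in C, C \subset S & asb (fconnected C)].
have P1 : Pc [set b].
  rewrite /Pc set11 sub1set hb /=; apply/asbP; exact: singleton_conn.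
case: (arg_maxnP (fun C : {set A} => #|C|) P1) => C.
case/and3P => hbC hCS /asbP hCc hmax.
exists C; split => //; split => // K' hCK hKS hKc.
have hK : Pc K' by rewrite /Pc hKS (subsetP hCK _ hbC) /=; apply/asbP.
apply/esym/eqP; rewrite eqEcard hCK; exact: hmax.
Qed.

Definition compo (A : finite_graph) (S : {set A}) (b : A) : {set A} :=
  match excluded_middle_informative (exists C, fcomponent S C /\ b \in C) with
  | left h => proj1_sig (constructive_indefinite_description _ h)
  | right _ => set0
  end.

Lemma compoP (A : finite_graph) (S : {set A}) b :
  b \in S -> fcomponent S (compo S b) /\ b \in compo S b.
Proof.
move=> hb; rewrite /compo; case: excluded_middle_informative => [h|h].
  exact: (proj2_sig (constructive_indefinite_description _ h)).
by exfalso; apply: h; exact: comp_exists.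
Qed.

Section Dsec.
Variables (F : nat -> finite_graph) (alpha : forall n, F n.+1 -> F n).
Notation IL := (invlim alpha).
Notation pr x k := (proj1_sig x k).
Variables (Kimg : forall k, {set F k}) (L : nat) (pt : IL).

Fixpoint Dc k : {set F k} :=
  match k with
  | 0 => if 0 < L then Kimg 0 else setT
  | k'.+1 => if k'.+1 < L then Kimg k'.+1
             else compo ((@alpha k') @^-1: Dc k') (pr pt k'.+1)
  end.

Lemma Dc_lt k : k < L -> Dc k = Kimg k.
Proof. case: k => [|k] h /=; by rewrite h. Qed.

Hypothesis h1 : forall k, (@alpha k) @: Kimg k.+1 = Kimg k.
Hypothesis h2 : forall k, fconnected (Kimg k).
Hypothesis h3 : forall k, k < L -> pr pt k \in Kimg k.
Hypothesis h4 : fconnected [set: F 0].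
Hypothesis h5 : forall k (Q : {set F k}), fconnected Q ->
  forall C, fcomponent ((@alpha k) @^-1: Q) C -> (@alpha k) @: C = Q.

Lemma Dc_ok k : fconnected (Dc k) /\ pr pt k \in Dc k.
Proof.
elim: k => [|k [IHc IHp]] /=.
  case: ifP => h; [split; [exact: h2|exact: h3] | split; [exact: h4|exact: in_setT]].
case: ifP => h; first by split; [exact: h2|exact: h3].
have hb : pr pt k.+1 \in (@alpha k) @^-1: Dc k by rewrite inE (proj2_sig pt k).
have [hC hbC] := compoP hb; case: hC => _ hconn _; by split.
Qed.

Lemma Dc_alpha k : (@alpha k) @: Dc k.+1 = Dc k.
Proof.
rewrite /=; case: ifP => h.
  rewrite (Dc_lt (ltnW h)); exact: h1.
have hb : pr pt k.+1 \in (@alpha k) @^-1: Dc k.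
  rewrite inE (proj2_sig pt k); exact: (Dc_ok k).2.
apply: (h5 (Dc_ok k).1); exact: (compoP hb).1.
Qed.
End Dsec.

Unset Implicit Arguments.

Theorem proposition6p5
  (G : finite_graph -> Prop) (Fix : forall A B : finite_graph, (A -> B) -> Prop)
  (F : nat -> finite_graph) (alpha : forall n, F n.+1 -> F n) :
  proj_fraisse_family G Fix ->
  (forall A : finite_graph, G A -> fconnected [set: A]) ->
  (forall (A B : finite_graph) (f : A -> B), G A -> G B -> Fix A B f -> confluent f) ->
  is_proj_fraisse_limit alpha G Fix ->
  kelley alpha.
Proof.
move=> hfam hconnG hconf hlim.
case: hfam => hepi _.
case: hlim => hGF [hFix _].
have epi : forall k, epimorphism (alpha k).
  move=> k; exact: hepi _ _ _ (hGF k.+1) (hGF k) (hFix k).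
have eA : forall k (a b : F k.+1), fg_edge a b -> fg_edge (alpha _ a) (alpha _ b).
  move=> k; exact: (epi k).1.
have conf : forall k (Q : {set F k}), fconnected Q ->
    forall C, fcomponent ((alpha k) @^-1: Q) C -> (alpha k) @: C = Q.
  move=> k; exact: (hconf _ _ _ (hGF k.+1) (hGF k) (hFix k)).2.
split.
  apply: (@chain_connected F alpha eA (fun k => setT)).
  - move=> k; apply/setP => b; rewrite inE; apply/imsetP.
    have [a ea] := (epi k).2.1 b; by exists a.
  - move=> k; exact: hconnG.
  - move=> x; split => // _ k; exact: in_setT.
move=> K p ps hKc hKconn hKp hconv.
pose L n := find (fun k => proj1_sig (ps n) k != proj1_sig p k) (iota 0 n).
have hL1 : forall n k, k < L n -> proj1_sig (ps n) k = proj1_sig p k.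
  move=> n k hk.
  have hkn : k < n by apply: leq_trans hk _; rewrite -{2}(size_iota 0 n) find_size.
  have := before_find 0 hk; rewrite nth_iota // add0n /= => /negbFE /eqP //.
have hL2 : forall n M, near M (ps n) p -> M < n -> M < L n.
  move=> n M hn hMn; rewrite ltnNge; apply/negP => hle.
  have hLn : L n < n by apply: leq_ltn_trans hle hMn.
  have hhas : has (fun k => proj1_sig (ps n) k != proj1_sig p k) (iota 0 n).
    by rewrite has_find size_iota.
  have := nth_find 0 hhas; rewrite (nth_iota 0 0 hLn) add0n /= => /eqP; apply.
  exact: hn _ hle.
have h1 := img_alpha K.
have h2 : forall k, fconnected (img K k) := fun k => img_conn hKconn.
have h3 : forall n k, k < L n -> proj1_sig (ps n) k \in img K k.
  move=> n k hk; rewrite hL1 //; exact: img_in.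
have h4 : fconnected [set: F 0] := hconnG _ (hGF 0).
pose D n := Dc (img K) (L n) (ps n).
have Dok : forall n k, fconnected (D n k) /\ proj1_sig (ps n) k \in D n k.
  move=> n k; exact: (Dc_ok h2 (h3 n) h4).
have Dal : forall n k, (alpha k) @: D n k.+1 = D n k.
  move=> n k; exact: (Dc_alpha h1 h2 (h3 n) h4 conf).
exists (fun n x => forall k, proj1_sig x k \in D n k).
split; [|split; [|split]].
- move=> n x hcl k; case: (hcl k) => y [hy hn].
  rewrite (hn k (leqnn k)); exact: hy k.
- move=> n; apply: (chain_connected eA (Dal n)) => //; by move=> k; case: (Dok n k).
- move=> n k; by case: (Dok n k).
- move=> M; case: (hconv M) => N hN; exists (maxn N M.+1) => n.
  rewrite geq_max => /andP [hNn hMn].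
  have hLM := hL2 n M (hN n hNn) hMn.
  have eD : D n M = img K M by exact: Dc_lt.
  split.
    move=> x hx; have := hx M; rewrite eD => /imgP [y [Ky ey]].
    exists y; split => //; apply: thread_eq_near; by rewrite ey.
  move=> y Ky; have hy : proj1_sig y M \in D n M by rewrite eD; exact: img_in.
  have [x [hx ex]] := chain_lift (Dal n) hy.
  exists x; split => //; apply: thread_eq_near; by rewrite ex.
Qed.
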